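(* Suppose Assumptions 1 and 2 hold and problem (P) is feasible (equivalently $\sum_i(\underline{x}_i-\phi_i(\underline{x}_i))\le\sum_i d_i\le\sum_i(\bar{x}_i-\phi_i(\bar{x}_i))$). Consider the gradient ascent dynamics $$\dot{\lambda}=\frac{dg^m(\lambda)}{d\lambda}=\sum_{i=1}^N\Big(d_i-\hat{x}_i(\lambda)+\phi_i\big(\hat{x}_i(\lambda)\big)\Big),\qquad \lambda(0)\in\mathbb{R}.$$ Then $\lim_{t\to\infty}\lambda(t)=\lambda^*$, where $\lambda^*$ is a maximizer of $g^m$ over $\mathbb{R}$, and $(\hat{x}_1(\lambda^* ),\dots,\hat{x}_N(\lambda^* ))$ is an optimal solution of problem (P).
   Context: For $i=1,\dots,N$: $d_i\in\mathbb{R}$, $\mathcal{X}_i=[\underline{x}_i,\bar{x}_i]$ a nonempty closed interval, $f_i,\phi_i:\mathbb{R}\to\mathbb{R}$. Problem (P): minimize $\sum_{i=1}^N f_i(x_i)$ subject to $\sum_{i=1}^N d_i=\sum_{i=1}^N(x_i-\phi_i(x_i))$ and $x_i\in\mathcal{X}_i$ for all $i$. Assumption 1: for each $i$, $f_i$ and $\phi_i$ are continuously differentiable, $f_i$ is strictly convex on $\mathcal{X}_i$, $\phi_i$ is convex on $\mathcal{X}_i$, and $\phi_i'(x_i)<1$ for all $x_i\in\mathcal{X}_i$. Assumption 2: $f_i'(x_i)>0$ for all $x_i\in\mathcal{X}_i$ and all $i$. Local Lagrangian: $\mathcal{L}^r_i(x_i,\lambda)=f_i(x_i)+\lambda(d_i-x_i+\phi_i(x_i))$.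 Let $v_i(x_i)=f_i'(x_i)(1-\phi_i'(x_i))^{-1}$ on $\mathcal{X}_i$ (strictly increasing). Define for $\lambda\in\mathbb{R}$: $\hat{x}_i(\lambda)=\underline{x}_i$ if $\lambda\le v_i(\underline{x}_i)$; $\hat{x}_i(\lambda)=v_i^{-1}(\lambda)$ if $v_i(\underline{x}_i)<\lambda<v_i(\bar{x}_i)$; $\hat{x}_i(\lambda)=\bar{x}_i$ if $\lambda\ge v_i(\bar{x}_i)$. Modified dual function: $g^m(\lambda)=\sum_{i=1}^N\mathcal{L}^r_i(\hat{x}_i(\lambda),\lambda)$; its derivative is $\sum_i(d_i-\hat{x}_i(\lambda)+\phi_i(\hat{x}_i(\lambda)))$. *)

(* Defs.v *)
From Stdlib Require Import Reals Lra ClassicalEpsilon.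
Open Scope R_scope.

Fixpoint sumR (N : nat) (g : nat -> R) : R :=
  match N with
  | O => 0
  | S n => sumR n g + g n
  end.

Definition strictly_convex_on (h : R -> R) (a b : R) : Prop :=
  forall x y t, a <= x <= b -> a <= y <= b -> x <> y -> 0 < t < 1 ->
    h (t * x + (1 - t) * y) < t * h x + (1 - t) * h y.

Definition convex_on (h : R -> R) (a b : R) : Prop :=
  forall x y t, a <= x <= b -> a <= y <= b -> 0 <= t <= 1 ->
    h (t * x + (1 - t) * y) <= t * h x + (1 - t) * h y.

Definition vfun (df dphi : R -> R) (x : R) : R := df x / (1 - dphi x).

(* v_i^{-1}(lam): the point of [a,b] where v takes value lam (chosen by
   Hilbert epsilon; unique because v is strictly increasing on [a,b]). *)
Definition vinv (df dphi : R -> R) (a b lam : R) : R :=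
  epsilon (inhabits 0) (fun x => a <= x <= b /\ vfun df dphi x = lam).

Definition xhat (df dphi : R -> R) (a b lam : R) : R :=
  if Rle_dec lam (vfun df dphi a) then a
  else if Rle_dec (vfun df dphi b) lam then b
  else vinv df dphi a b lam.

Definition Lr (f phi : R -> R) (d x lam : R) : R := f x + lam * (d - x + phi x).

Definition gm (N : nat) (d xl xu : nat -> R) (f phi df dphi : nat -> R -> R)
  (lam : R) : R :=
  sumR N (fun i => Lr (f i) (phi i) (d i)
                      (xhat (df i) (dphi i) (xl i) (xu i) lam) lam).

Definition dgm (N : nat) (d xl xu : nat -> R) (phi df dphi : nat -> R -> R)
  (lam : R) : R :=
  sumR N (fun i => let xi := xhat (df i) (dphi i) (xl i) (xu i) lam in
                   d i - xi + phi i xi).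

Definition feasibleP (N : nat) (d xl xu : nat -> R) (phi : nat -> R -> R)
  (x : nat -> R) : Prop :=
  (forall i, (i < N)%nat -> xl i <= x i <= xu i) /\
  sumR N d = sumR N (fun i => x i - phi i (x i)).

Definition optimalP (N : nat) (d xl xu : nat -> R) (f phi : nat -> R -> R)
  (x : nat -> R) : Prop :=
  feasibleP N d xl xu phi x /\
  forall y, feasibleP N d xl xu phi y ->
    sumR N (fun i => f i (x i)) <= sumR N (fun i => f i (y i)).

(* Main.v *)
Require Import Defs.
From Stdlib Require Import Reals Lra ClassicalEpsilon Lia FunctionalExtensionality.
Open Scope R_scope.

Lemma div_nonpos a h : a <= 0 -> 0 < h -> a / h <= 0.
Proof. intros. unfold Rdiv. assert (0 < / h) by (apply Rinv_0_lt_compat; lra). nra. Qed.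
Lemma div_nonneg_neg a h : a <= 0 -> h < 0 -> 0 <= a / h.
Proof. intros. unfold Rdiv. assert (/ h < 0) by (apply Rinv_lt_0_compat; lra). nra. Qed.

Lemma conv_grad g l a b x y : convex_on g a b -> a <= x <= b -> a <= y <= b ->
  derivable_pt_lim g x l -> g x + l * (y - x) <= g y.
Proof.
  intros Hc Hx Hy Hd.
  destruct (Req_dec x y) as [->|Hne]; [lra|].
  destruct (Rle_dec (g x + l * (y - x)) (g y)) as [ok|Hlt]; [exact ok|exfalso].
  apply Rnot_le_lt in Hlt.
  set (q := (g y - g x) / (y - x)).
  assert (Hyx : y - x <> 0) by lra.
  assert (Hqe : q - l = (g y - g x - l * (y - x)) / (y - x)) by (unfold q; field; exact Hyx).
  assert (Hqn : q <> l).
  { intro E. assert (q - l = 0) by lra. rewrite Hqe in H.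
    unfold Rdiv in H. apply Rmult_integral in H. destruct H as [H|H]; [lra|].
    apply Rinv_neq_0_compat in Hyx. contradiction. }
  set (eps := Rabs (q - l)).
  assert (Heps : 0 < eps) by (apply Rabs_pos_lt; lra).
  destruct (Hd eps Heps) as [[del Hdel] Hdl].
  set (t := Rmin (1/2) (del / (2 * Rabs (y - x)))).
  assert (Hax : 0 < Rabs (y - x)) by (apply Rabs_pos_lt; exact Hyx).
  assert (Ht0 : 0 < t).
  { unfold t. apply Rmin_glb_lt; [lra|]. apply Rdiv_lt_0_compat; lra. }
  assert (Ht1 : t <= 1/2) by apply Rmin_l.
  assert (Ht2 : t <= del / (2 * Rabs (y - x))) by apply Rmin_r.
  set (h := t * (y - x)).
  assert (Hh0 : h <> 0) by (unfold h; intro E; apply Rmult_integral in E; lra).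
  assert (Hhd : Rabs h < del).
  { unfold h. rewrite Rabs_mult, (Rabs_pos_eq t) by lra.
    apply Rmult_le_compat_r with (r := Rabs (y - x)) in Ht2; [|lra].
    replace (del / (2 * Rabs (y - x)) * Rabs (y - x)) with (del / 2) in Ht2 by (field; lra).
    lra. }
  specialize (Hdl h Hh0 Hhd).
  assert (Hcv := Hc y x t Hy Hx ltac:(lra)).
  replace (t * y + (1 - t) * x) with (x + h) in Hcv by (unfold h; ring).
  set (D := g (x + h) - g x) in *.
  assert (HD : D <= t * (g y - g x)) by (unfold D; lra).
  assert (HE : D / h - q = (D - t * (g y - g x)) / h) by (unfold q, h; field; split; lra).
  fold eps in Hdl.
  destruct (Rlt_dec x y) as [Hxy|Hxy].
  - assert (0 < h) by (unfold h; nra).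
    assert (D / h - q <= 0) by (rewrite HE; apply div_nonpos; lra).
    assert (q - l < 0).
    { rewrite Hqe. apply Rdiv_neg_pos ; lra. }
    unfold eps in Hdl. rewrite (Rabs_left (q - l)) in Hdl by lra.
    unfold Rabs in Hdl. destruct (Rcase_abs (D / h - l)); lra.
  - assert (h < 0) by (unfold h; nra).
    assert (0 <= D / h - q) by (rewrite HE; apply div_nonneg_neg; lra).
    assert (0 < q - l).
    { rewrite Hqe. apply Rdiv_neg_neg; lra. }
    unfold eps in Hdl. rewrite (Rabs_right (q - l)) in Hdl by lra.
    unfold Rabs in Hdl. destruct (Rcase_abs (D / h - l)); lra.
Qed.

Lemma sconv_conv g a b : strictly_convex_on g a b -> convex_on g a b.
Proof.
  intros H x y t Hx Hy Ht.
  destruct (Req_dec x y) as [->|Hne].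
  - replace (t * y + (1 - t) * y) with y by ring. lra.
  - destruct (Req_dec t 0) as [->|H0].
    + replace (0 * x + (1 - 0) * y) with y by ring. lra.
    + destruct (Req_dec t 1) as [->|H1].
      * replace (1 * x + (1 - 1) * y) with x by ring. lra.
      * left. apply H; auto; lra.
Qed.

Lemma df_strict g dg a b x y : strictly_convex_on g a b ->
  (forall z, derivable_pt_lim g z (dg z)) ->
  a <= x <= b -> a <= y <= b -> x < y -> dg x < dg y.
Proof.
  intros Hs Hd Hx Hy Hxy.
  assert (Hc := sconv_conv _ _ _ Hs).
  set (m := (x + y) / 2).
  assert (Hm : a <= m <= b) by (unfold m; lra).
  assert (H1 := conv_grad g (dg x) a b x m Hc Hx Hm (Hd x)).
  assert (H2 := conv_grad g (dg y) a b y x Hc Hy Hx (Hd y)).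
  assert (H3 := Hs x y (1/2) Hx Hy ltac:(lra) ltac:(lra)).
  replace (1 / 2 * x + (1 - 1 / 2) * y) with m in H3 by (unfold m; field).
  assert (K : dg x * (y - x) < dg y * (y - x)).
  { assert (m - x = (y - x) / 2) by (unfold m; field). rewrite H in H1. lra. }
  destruct (Rle_dec (dg y) (dg x)); [|lra].
  assert (dg y * (y - x) <= dg x * (y - x)) by (apply Rmult_le_compat_r; lra). lra.
Qed.

Lemma dphi_mono g dg a b x y : convex_on g a b ->
  (forall z, derivable_pt_lim g z (dg z)) ->
  a <= x <= b -> a <= y <= b -> x <= y -> dg x <= dg y.
Proof.
  intros Hc Hd Hx Hy Hxy.
  destruct (Req_dec x y) as [->|Hne]; [lra|].
  assert (H1 := conv_grad g (dg x) a b x y Hc Hx Hy (Hd x)).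
  assert (H2 := conv_grad g (dg y) a b y x Hc Hy Hx (Hd y)).
  destruct (Rle_dec (dg x) (dg y)); [lra|].
  assert (dg y * (y - x) < dg x * (y - x)) by (apply Rmult_lt_compat_r; lra). lra.
Qed.

Lemma v_strict f phi df dphi a b x y : strictly_convex_on f a b -> convex_on phi a b ->
  (forall z, derivable_pt_lim f z (df z)) -> (forall z, derivable_pt_lim phi z (dphi z)) ->
  (forall z, a <= z <= b -> dphi z < 1) -> (forall z, a <= z <= b -> 0 < df z) ->
  a <= x <= b -> a <= y <= b -> x < y -> vfun df dphi x < vfun df dphi y.
Proof.
  intros Hf Hp Hdf Hdp H1 Hpos Hx Hy Hxy.
  assert (A1 := df_strict f df a b x y Hf Hdf Hx Hy Hxy).
  assert (A2 := dphi_mono phi dphi a b x y Hp Hdp Hx Hy ltac:(lra)).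
  assert (B1 := H1 x Hx). assert (B2 := H1 y Hy). assert (C := Hpos x Hx).
  unfold vfun.
  apply Rlt_le_trans with (df y / (1 - dphi x)).
  - unfold Rdiv. apply Rmult_lt_compat_r; [apply Rinv_0_lt_compat; lra| lra].
  - unfold Rdiv. apply Rmult_le_compat_l; [lra|].
    apply Rinv_le_contravar; lra.
Qed.

Definition Pk (v : R -> R) a b lam x0 :=
  a <= x0 <= b /\ (forall y, a <= y <= b -> y < x0 -> v y < lam) /\
  (forall y, a <= y <= b -> x0 < y -> lam < v y).

Definition smono (v : R -> R) a b := forall x y, a <= x <= b -> a <= y <= b -> x < y -> v x < v y.

Lemma Pk_mono v a b l1 l2 x1 x2 : smono v a b -> l1 <= l2 -> Pk v a b l1 x1 -> Pk v a b l2 x2 -> x1 <= x2.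
Proof.
  intros Hs Hl [H1 [H1l H1r]] [H2 [H2l H2r]].
  destruct (Rle_dec x1 x2) as [ok|Hn]; [exact ok|exfalso].
  set (m := (x1 + x2) / 2).
  assert (A := H1l m ltac:(unfold m; lra) ltac:(unfold m; lra)).
  assert (B := H2r m ltac:(unfold m; lra) ltac:(unfold m; lra)).
  lra.
Qed.

Lemma Pk_uniq v a b l x1 x2 : smono v a b -> Pk v a b l x1 -> Pk v a b l x2 -> x1 = x2.
Proof.
  intros Hs H1 H2. apply Rle_antisym; [eapply Pk_mono; eauto; lra| eapply Pk_mono; eauto; lra].
Qed.

Lemma Pk_self v a b y : smono v a b -> a <= y <= b -> Pk v a b (v y) y.
Proof.
  intros Hs Hy. split; [exact Hy|split].
  - intros z Hz Hzy. apply Hs; auto.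
  - intros z Hz Hzy. apply Hs; auto.
Qed.

Lemma xhat_P df dphi a b lam : a <= b -> smono (vfun df dphi) a b ->
  (exists w, continuity w /\ forall x, a <= x <= b -> w x = vfun df dphi x) ->
  Pk (vfun df dphi) a b lam (xhat df dphi a b lam).
Proof.
  intros Hab Hs [w [Hwc Hw]].
  set (v := vfun df dphi) in *.
  unfold xhat. fold v.
  destruct (Rle_dec lam (v a)) as [H1|H1].
  - split; [lra|split].
    + intros y Hy Hya. lra.
    + intros y Hy Hay. assert (v a < v y) by (apply Hs; lra). lra.
  - destruct (Rle_dec (v b) lam) as [H2|H2].
    + split; [lra|split].
      * intros y Hy Hya. assert (v y < v b) by (apply Hs; lra). lra.
      * intros y Hy Hay. lra.
    + assert (Ex : exists x, a <= x <= b /\ v x = lam).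
      { destruct (IVT_cor (fun x => w x - lam) a b) as [z [Hz Hz0]].
        - intro x. apply continuity_pt_minus; [apply Hwc| apply continuity_pt_const; intros u u'; reflexivity].
        - exact Hab.
        - rewrite (Hw a), (Hw b) by lra. fold v.
          assert (v a - lam < 0) by lra. assert (0 < v b - lam) by lra. nra.
        - exists z. split; [exact Hz|]. rewrite <- (Hw z Hz). lra. }
      assert (Hsp := epsilon_spec (inhabits 0) _ Ex).
      unfold vinv. fold v. set (x0 := epsilon _ _) in *.
      destruct Hsp as [Hx0 Hvx0].
      split; [exact Hx0|split].
      * intros y Hy Hyx. rewrite <- Hvx0. apply Hs; auto.
      * intros y Hy Hyx. rewrite <- Hvx0. apply Hs; auto.
Qed.

Lemma Pk_cont v a b X : a <= b -> smono v a b -> (forall l, Pk v a b l (X l)) -> continuity X.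
Proof.
  intros Hab Hs HX l0.
  unfold continuity_pt, continue_in, limit1_in, limit_in. simpl. unfold R_dist.
  intros eps Heps.
  set (x0 := X l0).
  assert (Lo : exists d, d > 0 /\ forall l, l0 - d < l -> x0 - eps / 2 <= X l).
  { destruct (HX l0) as [Hx0 [Hl Hr]]. fold x0 in Hx0, Hl, Hr.
    destruct (Rlt_dec a x0) as [Hax|Hax].
    - set (y1 := Rmax a (x0 - eps / 2)).
      assert (Hy1 : a <= y1 <= b /\ y1 < x0 /\ x0 - eps/2 <= y1).
      { unfold y1. split; [split; [apply Rmax_l|apply Rmax_lub; lra]|].
        split; [apply Rmax_lub_lt; lra| apply Rmax_r]. }
      destruct Hy1 as [Hy1a [Hy1b Hy1c]].
      assert (Hv := Hl y1 Hy1a Hy1b).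
      exists (l0 - v y1). split; [lra|]. intros l Hlt.
      assert (y1 <= X l) by (apply (Pk_mono v a b (v y1) l y1 (X l)); auto; [lra|apply Pk_self; auto]).
      lra.
    - exists 1. split; [lra|]. intros l _. destruct (HX l) as [Hxl _]. lra. }
  assert (Hi : exists d, d > 0 /\ forall l, l < l0 + d -> X l <= x0 + eps / 2).
  { destruct (HX l0) as [Hx0 [Hl Hr]]. fold x0 in Hx0, Hl, Hr.
    destruct (Rlt_dec x0 b) as [Hax|Hax].
    - set (y1 := Rmin b (x0 + eps / 2)).
      assert (Hy1 : a <= y1 <= b /\ x0 < y1 /\ y1 <= x0 + eps/2).
      { unfold y1. split; [split; [apply Rmin_glb; lra|apply Rmin_l]|].
        split; [apply Rmin_glb_lt; lra| apply Rmin_r]. }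
      destruct Hy1 as [Hy1a [Hy1b Hy1c]].
      assert (Hv := Hr y1 Hy1a Hy1b).
      exists (v y1 - l0). split; [lra|]. intros l Hlt.
      assert (X l <= y1) by (apply (Pk_mono v a b l (v y1) (X l) y1); auto; [lra|apply Pk_self; auto]).
      lra.
    - exists 1. split; [lra|]. intros l _. destruct (HX l) as [Hxl _]. lra. }
  destruct Lo as [d1 [Hd1 Hlo]]. destruct Hi as [d2 [Hd2 Hhi]].
  exists (Rmin d1 d2). split; [apply Rmin_glb_lt; lra|].
  intros l [_ Hl]. 
  assert (Rmin d1 d2 <= d1) by apply Rmin_l. assert (Rmin d1 d2 <= d2) by apply Rmin_r.
  unfold Rabs in Hl. destruct (Rcase_abs (l - l0)).
  - assert (A := Hlo l ltac:(lra)). assert (B := Hhi l ltac:(lra)).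
    unfold Rabs; destruct (Rcase_abs (X l - x0)); lra.
  - assert (A := Hlo l ltac:(lra)). assert (B := Hhi l ltac:(lra)).
    unfold Rabs; destruct (Rcase_abs (X l - x0)); lra.
Qed.

Lemma lip_cont g : (forall x y, Rabs (g x - g y) <= Rabs (x - y)) -> continuity g.
Proof.
  intros H x0. unfold continuity_pt, continue_in, limit1_in, limit_in. simpl. unfold R_dist.
  intros eps Heps. exists eps. split; [lra|]. intros x [_ Hx].
  eapply Rle_lt_trans; [apply H|exact Hx].
Qed.

Lemma clamp_cont a b : continuity (fun x => Rmax a (Rmin b x)).
Proof.
  apply lip_cont. intros x y.
  unfold Rmax, Rmin.
  repeat (destruct Rle_dec); unfold Rabs; repeat (destruct Rcase_abs); lra.
Qed.

Lemma clamp_in a b x : a <= b -> a <= Rmax a (Rmin b x) <= b.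
Proof. intros. unfold Rmax, Rmin. repeat (destruct Rle_dec); lra. Qed.

Lemma clamp_id a b x : a <= x <= b -> Rmax a (Rmin b x) = x.
Proof. intros. unfold Rmax, Rmin. repeat (destruct Rle_dec); lra. Qed.

Lemma w_exists df dphi a b : a <= b -> continuity df -> continuity dphi ->
  (forall z, a <= z <= b -> dphi z < 1) ->
  exists w, continuity w /\ forall x, a <= x <= b -> w x = vfun df dphi x.
Proof.
  intros Hab Hc1 Hc2 H1.
  exists (fun x => vfun df dphi (Rmax a (Rmin b x))). split.
  - intro x. 
    change (continuity_pt (comp (vfun df dphi) (fun x => Rmax a (Rmin b x))) x).
    apply continuity_pt_comp; [apply clamp_cont|].
    unfold vfun. 
    change (continuity_pt (div_fct df (fun z => 1 - dphi z)) (Rmax a (Rmin b x))).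
    apply continuity_pt_div; [apply Hc1| |].
    + change (continuity_pt (minus_fct (fct_cte 1) dphi) (Rmax a (Rmin b x))).
      apply continuity_pt_minus; [apply continuity_pt_const; intros u u'; reflexivity| apply Hc2].
    + assert (K := H1 _ (clamp_in a b x Hab)). lra.
  - intros x Hx. rewrite clamp_id; auto.
Qed.

Lemma xphi_mono phi dphi a b x y : (forall z, derivable_pt_lim phi z (dphi z)) ->
  (forall z, a <= z <= b -> dphi z < 1) -> a <= x <= b -> a <= y <= b -> x <= y ->
  x - phi x <= y - phi y.
Proof.
  intros Hd H1 Hx Hy Hxy.
  destruct (Req_dec x y) as [->|Hne]; [lra|].
  destruct (MVT_cor2 (fun z => z - phi z) (fun z => 1 - dphi z) x y ltac:(lra)) as [c [Hc Hcr]].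
  - intros c Hc. apply (derivable_pt_lim_minus id phi). apply derivable_pt_lim_id. apply Hd.
  - assert (1 - dphi c > 0) by (apply Rlt_Rminus, H1; lra).
    assert (0 <= (1 - dphi c) * (y - x)) by nra. lra.
Qed.

Lemma Lr_min f phi df dphi d a b lam x0 y :
  (forall z, derivable_pt_lim f z (df z)) -> (forall z, derivable_pt_lim phi z (dphi z)) ->
  (forall z, a <= z <= b -> dphi z < 1) ->
  Pk (vfun df dphi) a b lam x0 -> a <= y <= b -> Lr f phi d x0 lam <= Lr f phi d y lam.
Proof.
  intros Hdf Hdp H1 [Hx0 [Hl Hr]] Hy.
  assert (HD : forall c, derivable_pt_lim (fun z => Lr f phi d z lam) c (df c + lam * (- 1 + dphi c))).
  { intro c. unfold Lr.
    apply (derivable_pt_lim_plus f (fun z => lam * (d - z + phi z))); [apply Hdf|].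
    apply (derivable_pt_lim_scal (fun z => d - z + phi z)).
    apply (derivable_pt_lim_plus (fun z => d - z) phi); [|apply Hdp].
    replace (-1) with (0 - 1) by ring.
    apply (derivable_pt_lim_minus (fct_cte d) id); [apply derivable_pt_lim_const|apply derivable_pt_lim_id]. }
  assert (Hsign : forall c, a <= c <= b -> df c + lam * (-1 + dphi c) = (1 - dphi c) * (vfun df dphi c - lam)).
  { intros c Hc. unfold vfun. assert (1 - dphi c <> 0) by (assert (K := H1 c Hc); lra). field. auto. }
  destruct (Rtotal_order x0 y) as [Hlt|[->|Hgt]].
  - destruct (MVT_cor2 _ _ x0 y Hlt (fun c _ => HD c)) as [c [Hc Hcr]].
    assert (Hcab : a <= c <= b) by lra.
    rewrite Hsign in Hc by exact Hcab.
    assert (K1 := H1 c Hcab). assert (K2 := Hr c Hcab ltac:(lra)).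
    assert (0 <= (1 - dphi c) * (vfun df dphi c - lam) * (y - x0)).
    { apply Rmult_le_pos; [apply Rmult_le_pos|]; lra. }
    lra.
  - lra.
  - destruct (MVT_cor2 _ _ y x0 Hgt (fun c _ => HD c)) as [c [Hc Hcr]].
    assert (Hcab : a <= c <= b) by lra.
    rewrite Hsign in Hc by exact Hcab.
    assert (K1 := H1 c Hcab). assert (K2 := Hl c Hcab ltac:(lra)).
    assert ((1 - dphi c) * (vfun df dphi c - lam) * (x0 - y) <= 0).
    { assert (0 < 1 - dphi c) by lra. assert (vfun df dphi c - lam < 0) by lra.
      assert ((1 - dphi c) * (vfun df dphi c - lam) < 0) by nra. nra. }
    lra.
Qed.

Lemma ode_conv_le (G lam : R -> R) mu :
  (forall x y, x <= y -> G y <= G x) -> G mu = 0 ->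
  (forall t, 0 < t -> derivable_pt_lim lam t (G (lam t))) -> lam 1 <= mu ->
  exists L, (forall eps, 0 < eps -> exists T, forall t, T <= t -> Rabs (lam t - L) < eps) /\ G L = 0.
Proof.
  intros HG Hmu Hode H1.
  assert (Hc : forall t, 0 < t -> continuity_pt lam t).
  { intros t Ht. apply derivable_continuous_pt. exists (G (lam t)). apply Hode; exact Ht. }
  assert (Hh : forall s t, 0 < s -> s <= t -> (lam t - mu) * (lam t - mu) <= (lam s - mu) * (lam s - mu)).
  { intros s t Hs Hst. destruct (Req_dec s t) as [->|Hne]; [lra|].
    destruct (MVT_cor2 (fun u => (lam u - mu) * (lam u - mu))
       (fun u => G (lam u) * (lam u - mu) + (lam u - mu) * G (lam u)) s t ltac:(lra)) as [c [Hcq Hcr]].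
    - intros c Hcc.
      assert (Hd : derivable_pt_lim (fun u => lam u - mu) c (G (lam c))).
      { replace (G (lam c)) with (G (lam c) - 0) by ring.
        apply (derivable_pt_lim_minus lam (fct_cte mu)); [apply Hode; lra|apply derivable_pt_lim_const]. }
      apply (derivable_pt_lim_mult (fun u => lam u - mu) (fun u => lam u - mu)); exact Hd.
    - assert (K : (lam c - mu) * G (lam c) <= 0).
      { destruct (Rle_dec mu (lam c)).
        + assert (G (lam c) <= 0) by (rewrite <- Hmu; apply HG; lra). nra.
        + assert (0 <= G (lam c)) by (rewrite <- Hmu; apply HG; lra). nra. }
      nra. }
  assert (Hbel : forall t, 1 <= t -> lam t <= mu).
  { intros t Ht. destruct (Rle_dec (lam t) mu) as [ok|Hn]; [exact ok|exfalso].
    destruct (IVT_cor (fun u => lam (Rmax 1 u) - mu) 1 t) as [s [Hs Hs0]].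
    - intro u. apply continuity_pt_minus; [|apply continuity_pt_const; intros p q; reflexivity].
      change (continuity_pt (comp lam (fun u => Rmax 1 u)) u).
      apply continuity_pt_comp.
      + apply lip_cont. intros x y. unfold Rmax, Rmin.
        repeat (destruct Rle_dec); unfold Rabs; repeat (destruct Rcase_abs); lra.
      + unfold comp. apply Hc. assert (1 <= Rmax 1 u) by apply Rmax_l. lra.
    - exact Ht.
    - assert (Rmax 1 1 = 1) by (unfold Rmax; destruct Rle_dec; lra).
      assert (Rmax 1 t = t) by (unfold Rmax; destruct Rle_dec; lra).
      simpl. rewrite H, H0. assert (0 < lam t - mu) by lra. assert (lam 1 - mu <= 0) by lra. nra.
    - assert (Rmax 1 s = s) by (unfold Rmax; destruct Rle_dec; lra).
      simpl in Hs0. rewrite H in Hs0.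
      assert (K := Hh s t ltac:(lra) ltac:(lra)).
      replace (lam s - mu) with 0 in K by lra. nra. }
  assert (Hmon : forall s t, 1 <= s -> s <= t -> lam s <= lam t).
  { intros s t Hs Hst. destruct (Req_dec s t) as [->|Hne]; [lra|].
    destruct (MVT_cor2 lam (fun u => G (lam u)) s t ltac:(lra)) as [c [Hcq Hcr]].
    - intros c Hcc. apply Hode. lra.
    - assert (0 <= G (lam c)) by (rewrite <- Hmu; apply HG; apply Hbel; lra). nra. }
  set (E := fun x => exists t, 1 <= t /\ x = lam t).
  destruct (completeness E) as [L [HLub HLleast]].
  - exists mu. intros x [t [Ht ->]]. apply Hbel; exact Ht.
  - exists (lam 1). exists 1. split; lra.
  - assert (HLmu : L <= mu).
    { apply HLleast. intros x [t [Ht ->]]. apply Hbel; exact Ht. }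
    assert (Hup : forall t, 1 <= t -> lam t <= L) by (intros t Ht; apply HLub; exists t; split; auto).
    exists L. split.
    + intros eps Heps.
      destruct (Rle_dec L (L - eps)) as [Hb|Hb]; [lra|].
      assert (Hex : exists t, 1 <= t /\ L - eps < lam t).
      { apply Classical_Prop.NNPP. intro Hn. apply Hb. apply HLleast.
        intros x [t [Ht ->]]. destruct (Rle_dec (lam t) (L - eps)) as [ok|Hn2]; [exact ok|].
        exfalso. apply Hn. exists t. split; [exact Ht|lra]. }
      destruct Hex as [t0 [Ht0 Hlt0]]. exists t0. intros t Ht.
      assert (lam t0 <= lam t) by (apply Hmon; lra). assert (lam t <= L) by (apply Hup; lra).
      unfold Rabs; destruct Rcase_abs; lra.
    + assert (HGL : 0 <= G L) by (rewrite <- Hmu; apply HG; exact HLmu).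
      destruct (Req_dec (G L) 0) as [ok|Hne]; [exact ok|exfalso].
      assert (Hpos : 0 < G L) by lra.
      assert (Hl1 : lam 1 <= L) by (apply Hup; lra).
      set (t := 1 + (L - lam 1 + 1) / G L).
      assert (Hq : (L - lam 1 + 1) / G L * G L = L - lam 1 + 1) by (field; lra).
      assert (Hq0 : 0 < (L - lam 1 + 1) / G L) by (apply Rdiv_lt_0_compat; lra).
      destruct (MVT_cor2 lam (fun u => G (lam u)) 1 t ltac:(unfold t; lra)) as [c [Hcq Hcr]].
      * intros c Hcc. apply Hode. lra.
      * assert (G L <= G (lam c)) by (apply HG; apply Hup; lra).
        assert (Hlt := Hup t ltac:(unfold t; lra)).
        assert (t - 1 = (L - lam 1 + 1) / G L) by (unfold t; ring).
        rewrite H0 in Hcq.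
        assert (G L * ((L - lam 1 + 1) / G L) <= G (lam c) * ((L - lam 1 + 1) / G L))
          by (apply Rmult_le_compat_r; lra).
        lra.
Qed.

Lemma ode_conv (G lam : R -> R) mu :
  (forall x y, x <= y -> G y <= G x) -> G mu = 0 ->
  (forall t, 0 < t -> derivable_pt_lim lam t (G (lam t))) ->
  exists L, (forall eps, 0 < eps -> exists T, forall t, T <= t -> Rabs (lam t - L) < eps) /\ G L = 0.
Proof.
  intros HG Hmu Hode.
  destruct (Rle_dec (lam 1) mu) as [H|H].
  - apply (ode_conv_le G lam mu); auto.
  - destruct (ode_conv_le (fun x => - G (- x)) (fun t => - lam t) (- mu)) as [L [HL HGL]].
    + intros x y Hxy. assert (G (- x) <= G (- y)) by (apply HG; lra). lra.
    + rewrite Ropp_involutive, Hmu. ring.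
    + intros t Ht. rewrite Ropp_involutive.
      apply (derivable_pt_lim_opp lam). apply Hode; exact Ht.
    + lra.
    + exists (- L). split.
      * intros eps Heps. destruct (HL eps Heps) as [T HT]. exists T. intros t Ht.
        specialize (HT t Ht). replace (lam t - - L) with (- (- lam t - L)) by ring.
        rewrite Rabs_Ropp. exact HT.
      * lra.
Qed.

Lemma sumR_le n g h : (forall i, (i < n)%nat -> g i <= h i) -> sumR n g <= sumR n h.
Proof.
  induction n; intros H; simpl; [lra|].
  assert (sumR n g <= sumR n h) by (apply IHn; intros; apply H; lia).
  assert (g n <= h n) by (apply H; lia). lra.
Qed.

Lemma sumR_ge_term n g j : (forall i, (i < n)%nat -> 0 <= g i) -> (j < n)%nat -> g j <= sumR n g.
Proof.
  induction n; intros H Hj; [lia|]. simpl.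
  assert (K2 : sumR n (fun _ => 0) <= sumR n g) by (apply sumR_le; intros; apply H; lia).
  assert (K3 : sumR n (fun _ : nat => 0) = 0) by (clear; induction n; simpl; [lra|rewrite IHn; lra]).
  destruct (Nat.eq_dec j n) as [->|Hne].
  - lra.
  - assert (g j <= sumR n g) by (apply IHn; [intros; apply H; lia|lia]).
    assert (0 <= g n) by (apply H; lia). lra.
Qed.

Lemma sumR_cont n (F : nat -> R -> R) : (forall i, (i < n)%nat -> continuity (F i)) ->
  continuity (fun x => sumR n (fun i => F i x)).
Proof.
  induction n; intros H; simpl.
  - intro x. apply continuity_pt_const. intros u v; reflexivity.
  - intro x. apply (continuity_pt_plus (fun x => sumR n (fun i => F i x)) (F n)).
    + apply IHn. intros; apply H; lia.
    + apply H; lia.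
Qed.

Lemma Lr_split N (f phi : nat -> R -> R) d x lam :
  sumR N (fun i => Lr (f i) (phi i) (d i) (x i) lam) =
  sumR N (fun i => f i (x i)) + lam * (sumR N d - sumR N (fun i => x i - phi i (x i))).
Proof. induction N; simpl; [ring|rewrite IHN; unfold Lr; ring]. Qed.

Lemma dgm_split N d xl xu phi df dphi lam :
  dgm N d xl xu phi df dphi lam =
  sumR N d - sumR N (fun i => xhat (df i) (dphi i) (xl i) (xu i) lam - phi i (xhat (df i) (dphi i) (xl i) (xu i) lam)).
Proof. unfold dgm. induction N; simpl; [ring|rewrite IHN; ring]. Qed.

Theorem theorem1
  (N : nat) (d xl xu : nat -> R) (f phi df dphi : nat -> R -> R)
  (Hint : forall i, (i < N)%nat -> xl i <= xu i)
  (Hdf : forall i, (i < N)%nat -> forall x, derivable_pt_lim (f i) x (df i x))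
  (Hdfc : forall i, (i < N)%nat -> continuity (df i))
  (Hdphi : forall i, (i < N)%nat -> forall x, derivable_pt_lim (phi i) x (dphi i x))
  (Hdphic : forall i, (i < N)%nat -> continuity (dphi i))
  (Hfconv : forall i, (i < N)%nat -> strictly_convex_on (f i) (xl i) (xu i))
  (Hphiconv : forall i, (i < N)%nat -> convex_on (phi i) (xl i) (xu i))
  (Hdphi1 : forall i, (i < N)%nat -> forall x, xl i <= x <= xu i -> dphi i x < 1)
  (Hdfpos : forall i, (i < N)%nat -> forall x, xl i <= x <= xu i -> 0 < df i x)
  (Hfeas : exists x, feasibleP N d xl xu phi x)
  (lam : R -> R)
  (Hode : forall t, 0 < t ->
     derivable_pt_lim lam t (dgm N d xl xu phi df dphi (lam t))) :
  exists lamstar : R,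
    (forall eps, 0 < eps -> exists T, forall t, T <= t -> Rabs (lam t - lamstar) < eps) /\
    (forall mu, gm N d xl xu f phi df dphi mu <= gm N d xl xu f phi df dphi lamstar) /\
    optimalP N d xl xu f phi (fun i => xhat (df i) (dphi i) (xl i) (xu i) lamstar).
Proof.
  set (X := fun i l => xhat (df i) (dphi i) (xl i) (xu i) l).
  set (v := fun i => vfun (df i) (dphi i)).
  assert (Hs : forall i, (i < N)%nat -> smono (v i) (xl i) (xu i)).
  { intros i Hi x y Hx Hy Hxy. unfold v.
    apply (v_strict (f i) (phi i) (df i) (dphi i) (xl i) (xu i)); auto. }
  assert (HP : forall i, (i < N)%nat -> forall l, Pk (v i) (xl i) (xu i) l (X i l)).
  { intros i Hi l. unfold X. apply xhat_P; auto; [apply (Hs i Hi)|apply w_exists; auto]. }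
  set (G := dgm N d xl xu phi df dphi).
  assert (HGs : forall l, G l = sumR N d - sumR N (fun i => X i l - phi i (X i l)))
    by (intro l; unfold G; rewrite dgm_split; reflexivity).
  assert (HGmon : forall x y, x <= y -> G y <= G x).
  { intros x y Hxy. rewrite !HGs.
    assert (sumR N (fun i => X i x - phi i (X i x)) <= sumR N (fun i => X i y - phi i (X i y))).
    { apply sumR_le. intros i Hi.
      destruct (HP i Hi x) as [Hx _]. destruct (HP i Hi y) as [Hy _].
      apply (xphi_mono (phi i) (dphi i) (xl i) (xu i)); auto.
      apply (Pk_mono (v i) (xl i) (xu i) x y); auto. }
    lra. }
  assert (HGc : continuity G).
  { assert (HGe : G = (fun l => sumR N d - sumR N (fun i => X i l - phi i (X i l))))
      by (apply functional_extensionality; exact HGs).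
    rewrite HGe. intro l.
    apply (continuity_pt_minus (fct_cte (sumR N d)) (fun l => sumR N (fun i => X i l - phi i (X i l)))).
    - apply continuity_pt_const. intros u u'; reflexivity.
    - apply (sumR_cont N (fun i l => X i l - phi i (X i l))).
      intros i Hi. intro x.
      assert (HXc : continuity (X i)) by (apply (Pk_cont (v i) (xl i) (xu i)); auto).
      apply (continuity_pt_minus (X i) (fun l => phi i (X i l))); [apply HXc|].
      apply (continuity_pt_comp (X i) (phi i)); [apply HXc|].
      apply derivable_continuous_pt. exists (dphi i (X i x)). apply Hdphi; auto. }
  set (m := - sumR N (fun i => Rabs (v i (xl i))) - 1).
  set (M := sumR N (fun i => Rabs (v i (xu i))) + 1).
  assert (Hm : forall i, (i < N)%nat -> X i m = xl i).
  { intros i Hi. symmetry. apply (Pk_uniq (v i) (xl i) (xu i) m); auto.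
    assert (K : Rabs (v i (xl i)) <= sumR N (fun i => Rabs (v i (xl i))))
      by (apply (sumR_ge_term N (fun i => Rabs (v i (xl i)))); auto; intros; apply Rabs_pos).
    assert (K2 : - Rabs (v i (xl i)) <= v i (xl i)) by (unfold Rabs; destruct Rcase_abs; lra).
    assert (Hab := Hint i Hi).
    split; [lra|split].
    - intros y Hy Hlt. lra.
    - intros y Hy Hlt. assert (v i (xl i) < v i y) by (apply Hs; auto; lra). unfold m. lra. }
  assert (HM : forall i, (i < N)%nat -> X i M = xu i).
  { intros i Hi. symmetry. apply (Pk_uniq (v i) (xl i) (xu i) M); auto.
    assert (K : Rabs (v i (xu i)) <= sumR N (fun i => Rabs (v i (xu i))))
      by (apply (sumR_ge_term N (fun i => Rabs (v i (xu i)))); auto; intros; apply Rabs_pos).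
    assert (K2 : v i (xu i) <= Rabs (v i (xu i))) by apply RRle_abs.
    assert (Hab := Hint i Hi).
    split; [lra|split].
    - intros y Hy Hlt. assert (v i y < v i (xu i)) by (apply Hs; auto; lra). unfold M. lra.
    - intros y Hy Hlt. lra. }
  destruct Hfeas as [x0 [Hx0b Hx0s]].
  assert (HGm : 0 <= G m).
  { rewrite HGs. rewrite Hx0s.
    assert (sumR N (fun i => X i m - phi i (X i m)) <= sumR N (fun i => x0 i - phi i (x0 i))).
    { apply sumR_le. intros i Hi. rewrite Hm by auto.
      assert (Hab := Hint i Hi). assert (K := Hx0b i Hi).
      apply (xphi_mono (phi i) (dphi i) (xl i) (xu i)); auto; lra. }
    lra. }
  assert (HGM : G M <= 0).
  { rewrite HGs. rewrite Hx0s.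
    assert (sumR N (fun i => x0 i - phi i (x0 i)) <= sumR N (fun i => X i M - phi i (X i M))).
    { apply sumR_le. intros i Hi. rewrite HM by auto.
      assert (Hab := Hint i Hi). assert (K := Hx0b i Hi).
      apply (xphi_mono (phi i) (dphi i) (xl i) (xu i)); auto; lra. }
    lra. }
  assert (HmM : m <= M).
  { unfold m, M.
    assert (0 <= sumR N (fun i => Rabs (v i (xl i)))).
    { replace 0 with (sumR N (fun _ => 0)) by (clear; induction N; simpl; [lra|rewrite IHN; lra]).
      apply sumR_le. intros; apply Rabs_pos. }
    assert (0 <= sumR N (fun i => Rabs (v i (xu i)))).
    { replace 0 with (sumR N (fun _ => 0)) by (clear; induction N; simpl; [lra|rewrite IHN; lra]).
      apply sumR_le. intros; apply Rabs_pos. }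
    lra. }
  destruct (IVT_cor G m M HGc HmM ltac:(nra)) as [mu [_ Hmu]].
  destruct (ode_conv G lam mu HGmon Hmu Hode) as [L [HL HGL]].
  exists L. split; [exact HL|].
  assert (Hgm : forall l, gm N d xl xu f phi df dphi l = sumR N (fun i => Lr (f i) (phi i) (d i) (X i l) l))
    by (intros; reflexivity).
  assert (HfX : gm N d xl xu f phi df dphi L = sumR N (fun i => f i (X i L))).
  { rewrite (Hgm L), Lr_split. rewrite HGs in HGL. fold X. rewrite HGL. ring. }
  assert (Hmin : forall l (y : nat -> R), (forall i, (i < N)%nat -> xl i <= y i <= xu i) ->
     sumR N (fun i => Lr (f i) (phi i) (d i) (X i l) l) <= sumR N (fun i => Lr (f i) (phi i) (d i) (y i) l)).
  { intros l y Hy. apply sumR_le. intros i Hi.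
    apply (Lr_min (f i) (phi i) (df i) (dphi i) (d i) (xl i) (xu i)); auto; apply (HP i Hi l). }
  assert (HXb : forall i, (i < N)%nat -> xl i <= X i L <= xu i) by (intros i Hi; apply (HP i Hi L)).
  split.
  - intro mu'. rewrite (Hgm mu').
    eapply Rle_trans; [apply (Hmin mu' (fun i => X i L)); exact HXb|].
    rewrite Lr_split, HfX. rewrite HGs in HGL. rewrite HGL. lra.
  - split.
    + split; [exact HXb|]. rewrite HGs in HGL. unfold X in HGL. lra.
    + intros y [Hyb Hys]. change (sumR N (fun i => f i (X i L)) <= sumR N (fun i => f i (y i))). rewrite <- HfX, (Hgm L).
      eapply Rle_trans; [apply (Hmin L y Hyb)|].
      rewrite Lr_split, Hys. lra.
Qed.
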